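(* There is an absolute constant $c>0$ such that for all $n\in\mathbb Z^+$, $k\in\{1,\dots,n\}$ and prime powers $q$, the fraction of linear $[n,k]$ codes over $\mathrm{GF}(q)$ (i.e., $k$-dimensional subspaces of $\mathrm{GF}(q)^n$) that are not $2$-MDS is at most $c\cdot 5^n/q$.
   Context: $\mathsf w(\cdot)$ is Hamming weight. A linear $[n,k]$ code is $2$-MDS if there do not exist three distinct vectors $e_0,e_1,e_2\in F^n$ in the same coset of the code with $\mathsf w(e_0)+\mathsf w(e_1)+\mathsf w(e_2)\le 2(n-k)$. *)

(* Defs.v *)
From HB Require Import structures.
From mathcomp Require Import all_boot all_order all_algebra all_field.
Set Implicit Arguments. Unset Strict Implicit. Unset Printing Implicit Defensive.
Import Order.TTheory GRing.Theory Num.Theory.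
Local Open Scope ring_scope.

Definition hweight (F : finFieldType) (n : nat) (e : 'rV[F]_n) : nat :=
  #|[set i : 'I_n | e 0 i != 0]|.

Definition is_code (F : finFieldType) (n k : nat) (C : {set 'rV[F]_n}) : bool :=
  [exists G : 'M[F]_(k, n), (\rank G == k) && (C == [set v | (v <= G)%MS])].

Definition codes (F : finFieldType) (n k : nat) : {set {set 'rV[F]_n}} :=
  [set C | is_code k C].

Definition two_MDS (F : finFieldType) (n k : nat) (C : {set 'rV[F]_n}) : bool :=
  ~~ [exists e0 : 'rV[F]_n, exists e1 : 'rV[F]_n, exists e2 : 'rV[F]_n,
        [&& e0 != e1, e0 != e2, e1 != e2,
            (e1 - e0) \in C, (e2 - e0) \in C &
            (hweight e0 + hweight e1 + hweight e2 <= 2 * (n - k))%N]].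

Definition non_two_MDS_codes (F : finFieldType) (n k : nat) : {set {set 'rV[F]_n}} :=
  [set C in codes F n k | ~~ two_MDS k C].

(* Main.v *)
Require Import Defs.
From HB Require Import structures.
From mathcomp Require Import all_boot all_order all_algebra all_field.
From mathcomp Require Import zify.
Set Implicit Arguments. Unset Strict Implicit. Unset Printing Implicit Defensive.
Import Order.TTheory GRing.Theory Num.Theory.
Local Open Scope ring_scope.

Definition ev (F : finFieldType) m n (A : 'M[F]_(m,n)) (C : {set 'rV[F]_n}) : bool :=
  [forall i, row i A \in C].
Definition NN (F : finFieldType) n k m (A : 'M[F]_(m,n)) : nat :=
  #|[set C in codes F n k | ev A C]|.
Definition rf (F : finFieldType) m n := [set A : 'M[F]_(m,n) | row_free A].

Lemma codesP (F : finFieldType) n k (C : {set 'rV[F]_n}) :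
  C \in codes F n k -> exists G : 'M[F]_(k,n), row_free G /\ C = [set v | (v <= G)%MS].
Proof.
rewrite inE => /existsP [G /andP [rG /eqP ->]]; exists G; split => //.
Qed.

Lemma ev_sub (F : finFieldType) n k m (A : 'M[F]_(m,n)) (G : 'M[F]_(k,n)) :
  ev A [set v | (v <= G)%MS] = (A <= G)%MS.
Proof.
apply/forallP/row_subP => H i; [by move: (H i); rewrite inE | by rewrite inE].
Qed.

Lemma NN_eqmx (F : finFieldType) n k m1 m2 (A : 'M[F]_(m1,n)) (B : 'M[F]_(m2,n)) :
  (A :=: B)%MS -> NN k A = NN k B.
Proof.
move=> eqAB; apply: eq_card => C; rewrite !inE; apply: andb_id2l => Cc.
have [G [_ ->]] : exists G : 'M[F]_(k,n), row_free G /\ C = [set v | (v <= G)%MS] by apply: codesP; rewrite inE.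
rewrite !ev_sub. move/eqmxP/andP: eqAB => [AB BA].
apply/idP/idP => H; [exact: submx_trans BA H | exact: submx_trans AB H].
Qed.

Lemma sub_mulU (F : finFieldType) n k (w : 'rV[F]_n) (G : 'M[F]_(k,n)) (V : 'M[F]_n) :
  V \in unitmx -> (w <= G *m V)%MS = (w *m invmx V <= G)%MS.
Proof.
move=> uV; have fV : row_free V by rewrite row_free_unit.
rewrite -(submxMfree (w *m invmx V) G fV).
by rewrite mulmxKV.
Qed.

Lemma subM_mulU (F : finFieldType) n k m (w : 'M[F]_(m,n)) (G : 'M[F]_(k,n)) (V : 'M[F]_n) :
  V \in unitmx -> (w <= G *m V)%MS = (w *m invmx V <= G)%MS.
Proof.
move=> uV; have fV : row_free V by rewrite row_free_unit.
rewrite -(submxMfree (w *m invmx V) G fV).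
by rewrite mulmxKV.
Qed.

Lemma NN_mulU_le (F : finFieldType) n k m (B : 'M[F]_(m,n)) (U : 'M[F]_n) :
  U \in unitmx -> (NN k (B *m U) <= NN k B)%N.
Proof.
move=> uU; rewrite /NN.
set g := fun C : {set 'rV[F]_n} => [set v *m invmx U | v in C].
have ginj : injective g.
  move=> C1 C2 e; apply/setP => v.
  have inj : injective (fun v : 'rV[F]_n => v *m invmx U).
    by apply: row_free_inj; rewrite row_free_unit unitmx_inv.
  have := congr1 (fun S : {set 'rV[F]_n} => (v *m invmx U) \in S) e.
  by rewrite /g /= !(mem_imset _ _ inj).
rewrite -(card_imset _ ginj); apply: subset_leq_card.
apply/subsetP => C' /imsetP [C]; rewrite inE => /andP [Cc evC] ->.
have [G [rG eC]] := codesP Cc.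
have eg : g C = [set v | (v <= G *m invmx U)%MS].
  apply/setP => w; rewrite inE sub_mulU ?unitmx_inv // invmxK.
  apply/imsetP/idP => [[v] | H].
    by rewrite eC inE => vG ->; rewrite mulmxKV.
  by exists (w *m U); rewrite ?eC ?inE ?mulmxK.
rewrite inE eg ev_sub subM_mulU ?unitmx_inv // invmxK.
rewrite eC ev_sub in evC; rewrite evC andbT inE.
apply/existsP; exists (G *m invmx U); rewrite eqxx andbT.
rewrite mxrankMfree ?row_free_unit ?unitmx_inv //.
Qed.

Lemma NN_mulU (F : finFieldType) n k m (B : 'M[F]_(m,n)) (U : 'M[F]_n) :
  U \in unitmx -> NN k (B *m U) = NN k B.
Proof.
move=> uU; apply/eqP; rewrite eqn_leq NN_mulU_le //=.
have uU' : invmx U \in unitmx by rewrite unitmx_inv.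
have := @NN_mulU_le F n k m (B *m U) (invmx U) uU'.
by rewrite mulmxK.
Qed.

Lemma NN_const (F : finFieldType) n k m (A : 'M[F]_(m,n)) :
  row_free A -> NN k A = NN k (pid_mx m : 'M[F]_(m,n)).
Proof.
move=> rA.
have rk : \rank A = m by apply/eqP.
rewrite -(NN_mulU k (pid_mx m : 'M[F]_(m,n)) (row_ebase_unit A)).
apply: NN_eqmx.
rewrite -{1}(mulmx_ebase A) rk -mulmxA.
by apply: eqmxMfull; rewrite row_full_unit col_ebase_unit.
Qed.

Lemma card_sum (J : finType) (Y : {set J}) (P : pred J) :
  #|[set j in Y | P j]| = (\sum_(j in Y) P j)%N.
Proof.
rewrite -sum1_card big_mkcond [RHS]big_mkcond /=; apply: eq_bigr => j _.
by rewrite !inE; case: (j \in Y); case: (P j).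
Qed.

Lemma double_count (I J : finType) (X : {set I}) (Y : {set J}) (R : I -> J -> bool) :
  (\sum_(i in X) #|[set j in Y | R i j]| = \sum_(j in Y) #|[set i in X | R i j]|)%N.
Proof.
under eq_bigr do rewrite card_sum.
under [RHS]eq_bigr do rewrite card_sum.
exact: exchange_big.
Qed.

Lemma count_in_code (F : finFieldType) n k m (C : {set 'rV[F]_n}) :
  C \in codes F n k -> #|[set A in rf F m n | ev A C]| = #|rf F m k|.
Proof.
move=> /codesP [G [rG ->]].
have -> : [set A in rf F m n | ev A [set v | (v <= G)%MS]] = (mulmx^~ G) @: rf F m k.
  apply/setP => A; rewrite !inE ev_sub; apply/andP/imsetP.
    move=> [rA /submxP [D eD]]; exists D => //.
    by rewrite inE /row_free -(mxrankMfree _ rG) -eD.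
  move=> [D]; rewrite inE => rD ->; split; last exact: submxMl.
  by rewrite /row_free mxrankMfree.
by rewrite card_imset //; apply: row_free_inj.
Qed.

Lemma rf_grow (F : finFieldType) m k l :
  (#|rf F m k| * #|F| ^ (m * l) <= #|rf F m (k + l)|)%N.
Proof.
rewrite -card_mx -cardsT -cardsX.
rewrite -(card_imset _ (f := fun p : 'M[F]_(m,k) * 'M[F]_(m,l) => row_mx p.1 p.2)); last first.
  by move=> [X1 Y1] [X2 Y2] /= /eq_row_mx [-> ->].
apply: subset_leq_card; apply/subsetP => A /imsetP [[X Y]]; rewrite !inE /= => /andP [rX _] ->.
rewrite /row_free eqn_leq rank_leq_row /=.
have eX : row_mx X Y *m col_mx 1%:M 0 = X by rewrite mul_row_col mulmx1 mulmx0 addr0.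
by move/eqP: rX => {1}<-; rewrite -{1}eX mxrankM_maxl.
Qed.

Lemma NN_bound (F : finFieldType) n k m (A : 'M[F]_(m,n)) :
  (k <= n)%N -> row_free A -> (NN k A * #|F| ^ (m * (n - k)) <= #|codes F n k|)%N.
Proof.
move=> kn rA.
have key : (#|rf F m n| * NN k A = #|codes F n k| * #|rf F m k|)%N.
  have e1 : (\sum_(B in rf F m n) NN k B = #|rf F m n| * NN k A)%N.
    rewrite -sum_nat_const; apply: eq_bigr => B; rewrite inE => rB.
    by rewrite (NN_const k rB) (NN_const k rA).
  rewrite -e1 /NN double_count -sum_nat_const.
  by apply: eq_bigr => C Cc; rewrite (count_in_code _ Cc).
have pos : (0 < #|rf F m n|)%N by apply/card_gt0P; exists A; rewrite inE.
rewrite -(leq_pmul2l pos) mulnA key -mulnA [(#|rf F m n| * _)%N]mulnC leq_mul2l.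
apply/orP; right.
by have := rf_grow F m k (n - k); rewrite subnKC.
Qed.

Lemma ffun_count (T : finType) n (c : T -> nat) d q K s :
  (0 < q)%N -> (forall t, c t <= d)%N -> (\sum_t q ^ (d - c t) <= K)%N ->
  (#|[set x : {ffun 'I_n -> T} | \sum_i c (x i) <= s]| * q ^ (d * n - s) <= K ^ n)%N.
Proof.
move=> q0 cd sK.
rewrite -sum_nat_const.
apply: (@leq_trans (\sum_(x : {ffun 'I_n -> T}) \prod_i q ^ (d - c (x i)))%N).
  rewrite [X in (_ <= X)%N](bigID (fun x => x \in [set x : {ffun 'I_n -> T} | \sum_i c (x i) <= s]%N)) /=.
  apply: leq_trans (leq_addr _ _); apply: leq_sum => x; rewrite inE => xs.
  rewrite -expn_sum sumnB; last by move=> i _; exact: cd.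
  rewrite sum_nat_const card_ord mulnC.
  by apply: leq_pexp2l => //; rewrite leq_sub2l.
have := bigA_distr_bigA (fun (i : 'I_n) (t : T) => (q ^ (d - c t))%N); move=> <-.
rewrite prod_nat_const card_ord.
case: n => [|n] //; by rewrite leq_exp2r.
Qed.

Definition c2 (F : finFieldType) (u v : F) : nat :=
  addn ((u != 0) || (v != 0)) [&& u != 0, v != 0 & u != v].

Lemma sum_ind (T : finType) (P : pred T) : (\sum_t (P t : nat))%N = #|[set t | P t]|.
Proof.
rewrite -sum1_card [RHS]big_mkcond; apply: eq_bigr => t _; rewrite inE; by case: (P t).
Qed.

Lemma c2_sum (F : finFieldType) :
  (\sum_(t : F * F) #|F| ^ (2 - c2 t.1 t.2) <= 5 * #|F| ^ 2)%N.
Proof.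
set q := #|F|.
apply: (@leq_trans (\sum_(t : F * F) (q ^ 2 * (t == (0%R,0%R)) + q * (t.1 == 0%R) + q * (t.2 == 0%R)
     + q * (t.1 == t.2) + 1))%N).
  apply: leq_sum => [[u v]] _ /=; rewrite /c2 /=.
  have [->|u0] := eqVneq u 0; have [->|v0] := eqVneq v 0 => /=.
  - rewrite subn0; case: eqP => [_|[]] //=; lia.
  - rewrite (_ : 2 - (1 + 0) = 1)%N // expn1; lia.
  - rewrite (_ : 2 - (1 + 0) = 1)%N // expn1; lia.
  - have [->|uv] := eqVneq u v.
      rewrite /= (_ : 2 - (1 + 0) = 1)%N // expn1; lia.
    rewrite (_ : 2 - (1 + 1) = 0)%N // expn0; lia.
rewrite !big_split /= -!big_distrr /= !sum_ind.
have e0 : #|[set t : F * F | t == (0%R, 0%R)]| = 1%N.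
  rewrite (_ : [set t : F * F | t == (0%R, 0%R)] = [set (0%R, 0%R)]) ?cards1 //.
  by apply/setP => t; rewrite !inE.
have e1 : #|[set t : F * F | t.1 == 0%R]| = q.
  rewrite (_ : [set t : F * F | t.1 == 0%R] = setX [set 0%R] setT) ?cardsX ?cards1 ?cardsT ?mul1n //.
  by apply/setP => -[u v]; rewrite !inE andbT.
have e2 : #|[set t : F * F | t.2 == 0%R]| = q.
  rewrite (_ : [set t : F * F | t.2 == 0%R] = setX setT [set 0%R]) ?cardsX ?cards1 ?cardsT ?muln1 //.
  by apply/setP => -[u v]; rewrite !inE.
have e3 : #|[set t : F * F | t.1 == t.2]| = q.
  rewrite (_ : [set t : F * F | t.1 == t.2] = (fun u : F => (u, u)) @: setT).
    by rewrite card_imset ?cardsT // => x y [].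
  apply/setP => -[u v]; rewrite !inE /=; apply/eqP/imsetP => [->|[w _ [-> ->]]] //.
  by exists v.
have e4 : (\sum_(t : F * F) 1 = q * q)%N by rewrite sum1_card card_prod.
rewrite e0 e1 e2 e3 e4; lia.
Qed.

Lemma c1_sum (F : finFieldType) :
  (\sum_(u : F) #|F| ^ (1 - (u != 0%R)) <= 5 * #|F|)%N.
Proof.
set q := #|F|.
apply: (@leq_trans (\sum_(u : F) (q * (u == 0%R) + 1))%N).
  apply: leq_sum => u _; case: (u == 0%R) => /=.
    rewrite subn0 expn1; lia.
  rewrite subnn expn0; lia.
rewrite big_split /= -big_distrr /= sum_ind sum1_card.
have e1 : #|[set u : F | u == 0%R]| = 1%N.
  rewrite (_ : [set u : F | u == 0%R] = [set 0%R]) ?cards1 //.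
  by apply/setP => t; rewrite !inE.
rewrite e1 -/q; lia.
Qed.

Definition cost2 (F : finFieldType) n (A : 'M[F]_(2,n)) : nat :=
  (\sum_i c2 (A ord0 i) (A ord_max i))%N.
Definition S2 (F : finFieldType) n r :=
  [set A : 'M[F]_(2,n) | row_free A && (cost2 A <= 2 * r)%N].
Definition S1 (F : finFieldType) n r :=
  [set A : 'M[F]_(1,n) | row_free A && (hweight A <= r)%N].

Lemma S2_card (F : finFieldType) n r : (r <= n)%N ->
  (#|S2 F n r| <= 5 ^ n * #|F| ^ (2 * r))%N.
Proof.
move=> rn.
have q0 : (0 < #|F|)%N by apply/card_gt0P; exists 0%R.
set X := [set x : {ffun 'I_n -> F * F} | \sum_i c2 (x i).1 (x i).2 <= 2 * r]%N.
have h := @ffun_count (F * F)%type n (fun t => c2 t.1 t.2) 2 #|F| (5 * #|F| ^ 2) (2 * r) q0.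
have {h} h : (#|X| * #|F| ^ (2 * n - 2 * r) <= (5 * #|F| ^ 2) ^ n)%N.
  apply: h; last exact: c2_sum.
  by move=> t; rewrite /c2; case: (_ || _); case: [&& _, _ & _].
have SX : (#|S2 F n r| <= #|X|)%N.
  pose f := fun A : 'M[F]_(2,n) => [ffun i => (A ord0 i, A ord_max i)].
  have finj : injective f.
    move=> A B e; apply/matrixP => i j.
    have := congr1 (fun g : {ffun 'I_n -> F * F} => g j) e; rewrite /f !ffunE => -[e0 e1].
    case: i => [[|[|//]] Hi].
      by rewrite (_ : Ordinal Hi = ord0) ?e0 //; apply: val_inj.
    by rewrite (_ : Ordinal Hi = ord_max) ?e1 //; apply: val_inj.
  rewrite -(card_imset _ finj); apply: subset_leq_card; apply/subsetP => x /imsetP [A].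
  rewrite !inE => /andP [_ cA] ->; rewrite /cost2 in cA.
  by under eq_bigr do rewrite ffunE.
rewrite -(@leq_pmul2r (#|F| ^ (2 * n - 2 * r))) ?expn_gt0 ?q0 //.
apply: leq_trans (leq_mul SX (leqnn _)) _; apply: leq_trans h _.
rewrite expnMn -expnM -mulnA -expnD subnKC ?leq_mul2l ?rn ?orbT // mulnC ?leqnn ?orbT //.
Qed.

Lemma hweight_sum (F : finFieldType) n (A : 'M[F]_(1,n)) :
  hweight A = (\sum_i (A 0%R i != 0%R))%N.
Proof. by rewrite /hweight sum_ind. Qed.

Lemma S1_card (F : finFieldType) n r : (r <= n)%N ->
  (#|S1 F n r| <= 5 ^ n * #|F| ^ r)%N.
Proof.
move=> rn.
have q0 : (0 < #|F|)%N by apply/card_gt0P; exists 0%R.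
set X := [set x : {ffun 'I_n -> F} | \sum_i (x i != 0%R) <= r]%N.
have h := @ffun_count F n (fun t => nat_of_bool (t != 0%R)) 1 #|F| (5 * #|F|) r q0.
have {h} h : (#|X| * #|F| ^ (1 * n - r) <= (5 * #|F|) ^ n)%N.
  apply: h; last exact: c1_sum.
  by move=> t; case: (_ != _).
have SX : (#|S1 F n r| <= #|X|)%N.
  pose f := fun A : 'M[F]_(1,n) => [ffun i => A 0 i].
  have finj : injective f.
    move=> A B e; apply/matrixP => i j.
    have := congr1 (fun g : {ffun 'I_n -> F} => g j) e; rewrite /f !ffunE => e0.
    by rewrite (ord1 i).
  rewrite -(card_imset _ finj); apply: subset_leq_card; apply/subsetP => x /imsetP [A].
  rewrite !inE hweight_sum => /andP [_ cA] ->.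
  by under eq_bigr do rewrite ffunE.
rewrite -(@leq_pmul2r (#|F| ^ (1 * n - r))) ?expn_gt0 ?q0 //.
apply: leq_trans (leq_mul SX (leqnn _)) _; apply: leq_trans h _.
rewrite expnMn -mulnA -expnD subnKC ?mul1n //.
Qed.

Lemma c2_le2 (F : finFieldType) (u v : F) : (c2 u v <= 2)%N.
Proof. by rewrite /c2; case: (_ != _); case: (_ != _); case: (_ != _). Qed.

Lemma c2_diag (F : finFieldType) (u : F) : (c2 u u <= 1)%N.
Proof. by rewrite /c2 eqxx !andbF addn0; case: (_ != _). Qed.

Lemma c2_tri (F : finFieldType) (x y z : F) :
  (c2 (y - x)%R (z - x)%R <= (x != 0%R) + (y != 0%R) + (z != 0%R))%N.
Proof.
rewrite /c2.
have [->|x0] := eqVneq x 0.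
  rewrite !subr0 /=.
  by case: (y != 0%R); case: (z != 0%R) => //=; case: (y != z).
have [->|y0] := eqVneq y 0; have [->|z0] := eqVneq z 0 => //=.
- exact: c2_diag.
- exact: c2_le2.
- exact: c2_le2.
- exact: leq_trans (c2_le2 _ _) _.
Qed.

Lemma c2_scale (F : finFieldType) (u l : F) :
  l != 0 -> l != 1 -> c2 u (l * u) = (2 * (u != 0%R))%N.
Proof.
move=> l0 l1; rewrite /c2.
have [->|u0] := eqVneq u 0; first by rewrite mulr0 eqxx.
rewrite mulf_eq0 (negPf l0) (negPf u0) /=.
suff -> : u != l * u by [].
apply/eqP => e; move/eqP: l1; apply.
by apply: (mulIf u0); rewrite mul1r -e.
Qed.

Lemma c2_scale2 (F : finFieldType) (u v l : F) :
  l != 0 -> c2 (l * u) (l * v) = c2 u v.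
Proof.
move=> l0; rewrite /c2 !mulf_eq0 (negPf l0) /=.
by rewrite (inj_eq (mulfI l0)).
Qed.

Definition mk2 (F : finFieldType) n (a b : 'rV[F]_n) : 'M[F]_(2,n) :=
  \matrix_(i < 2, j < n) (if i == ord0 then a 0 j else b 0 j).

Lemma row_mk2 (F : finFieldType) n (a b : 'rV[F]_n) (i : 'I_2) :
  row i (mk2 a b) = if i == ord0 then a else b.
Proof.
apply/rowP => j; rewrite !mxE; case: (i == ord0) => //.
Qed.

Lemma witness (F : finFieldType) n k (C : {set 'rV[F]_n}) :
  (k <= n)%N -> C \in codes F n k -> ~~ two_MDS k C ->
  (exists2 A, A \in S2 F n (n - k) & ev A C) \/ (exists2 A, A \in S1 F n (n - k) & ev A C).
Proof.
move=> kn Cc; have [G [rG eC]] := codesP Cc.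
rewrite /two_MDS negbK => /existsP [e0 /existsP [e1 /existsP [e2]]].
case/and5P => n01 n02 n12 aC /andP [bC wt].
set a := e1 - e0 in aC; set b := e2 - e0 in bC.
have aG : (a <= G)%MS by move: aC; rewrite eC inE.
have bG : (b <= G)%MS by move: bC; rewrite eC inE.
have a0 : a != 0 by rewrite /a subr_eq0 eq_sym.
have b0 : b != 0 by rewrite /b subr_eq0 eq_sym.
have ab : a != b.
  apply: contraNneq n12 => e; move/(congr1 (fun x => x + e0)): e.
  by rewrite /a /b !subrK => ->.
have costab : (\sum_i c2 (a 0%R i) (b 0%R i) <= 2 * (n - k))%N.
  apply: leq_trans wt; rewrite !hweight_sum -!big_split /=.
  by apply: leq_sum => i _; rewrite !mxE c2_tri.
case: (boolP (b <= a)%MS) => [/sub_rVP [l el] | nba].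
  right; exists a; last by rewrite eC ev_sub.
  have l0 : l != 0 by apply: contraNneq b0 => l0; rewrite el l0 scale0r.
  have l1 : l != 1 by apply: contraNneq ab => l1; rewrite el l1 scale1r.
  rewrite inE /row_free rank_rV a0 /=.
  rewrite -(leq_pmul2l (_ : 0 < 2)%N) //; apply: leq_trans costab.
  rewrite hweight_sum big_distrr /=; apply: eq_leq; apply: eq_bigr => i _.
  by rewrite el [X in c2 _ X]mxE c2_scale.
left; exists (mk2 a b); last first.
  rewrite eC ev_sub; apply/row_subP => i; rewrite row_mk2; by case: (i == ord0).
rewrite inE; apply/andP; split.
  rewrite /row_free eqn_leq rank_leq_row /=.
  have sab : ((a + b)%MS <= mk2 a b)%MS.
    rewrite addsmx_sub; apply/andP; split.
      by have := row_sub ord0 (mk2 a b); rewrite row_mk2 eqxx.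
    by have := row_sub ord_max (mk2 a b); rewrite row_mk2.
  apply: leq_trans (mxrankS sab).
  have := mxrank_leqif_sup (addsmxSl a b); move/ltn_leqif.
  rewrite rank_rV a0 => ->.
  apply/negP => sba; move/negP: nba; apply.
  exact: submx_trans (addsmxSr a b) sba.
rewrite /cost2; apply: leq_trans costab; apply: eq_leq; apply: eq_bigr => i _.
by rewrite !mxE.
Qed.

Lemma scale_count (F : finFieldType) n k m (S : {set 'M[F]_(m,n)}) (C : {set 'rV[F]_n}) (A : 'M[F]_(m,n)) :
  (forall l B, l != 0 -> B \in S -> l *: B \in S) -> C \in codes F n k ->
  A \in S -> A != 0 -> ev A C -> (#|F| - 1 <= #|[set B in S | ev B C]|)%N.
Proof.
move=> Scl Cc AS A0 evA.
have [G [rG eC]] := codesP Cc.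
have finj : injective (fun l : F => l *: A).
  move=> l l' e; apply/eqP; rewrite -subr_eq0.
  have : (l - l') *: A == 0 by rewrite scalerBl e subrr.
  by rewrite scaler_eq0 (negPf A0) orbF.
rewrite subn1 -(cardsC1 (0 : F)) -(card_imset _ finj).
apply: subset_leq_card; apply/subsetP => B /imsetP [l]; rewrite !inE => l0 ->.
rewrite Scl //=; move: evA; rewrite eC !ev_sub; exact: scalemx_sub.
Qed.

Lemma rf_neq0 (F : finFieldType) m n (A : 'M[F]_(m.+1,n)) : row_free A -> A != 0.
Proof. by move=> rA; apply: contraTneq rA => ->; rewrite /row_free mxrank0. Qed.

Lemma S2_scale (F : finFieldType) n r (l : F) (B : 'M[F]_(2,n)) :
  l != 0 -> B \in S2 F n r -> l *: B \in S2 F n r.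
Proof.
move=> l0; rewrite !inE /row_free (eqmx_rank (introT eqmxP (eqmx_scale B l0))) => /andP [-> cB] /=.
apply: leq_trans cB; apply: eq_leq; apply: eq_bigr => i _.
by rewrite !mxE c2_scale2.
Qed.

Lemma S1_scale (F : finFieldType) n r (l : F) (B : 'M[F]_(1,n)) :
  l != 0 -> B \in S1 F n r -> l *: B \in S1 F n r.
Proof.
move=> l0; rewrite !inE /row_free (eqmx_rank (introT eqmxP (eqmx_scale B l0))) => /andP [-> cB] /=.
apply: leq_trans cB; apply: eq_leq; rewrite !hweight_sum; apply: eq_bigr => i _.
by rewrite !mxE mulf_eq0 (negPf l0).
Qed.

Lemma sumNN (F : finFieldType) n k m (S : {set 'M[F]_(m,n)}) K :
  (k <= n)%N -> (forall A, A \in S -> row_free A) ->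
  (#|S| <= K * #|F| ^ (m * (n - k)))%N ->
  (\sum_(A in S) NN k A <= K * #|codes F n k|)%N.
Proof.
move=> kn Srf SK.
have q0 : (0 < #|F| ^ (m * (n - k)))%N by rewrite expn_gt0; apply/orP; left; apply/card_gt0P; exists 0%R.
rewrite -(leq_pmul2r q0) big_distrl /=.
apply: (@leq_trans (\sum_(A in S) #|codes F n k|)%N).
  by apply: leq_sum => A AS; apply: NN_bound => //; apply: Srf.
rewrite sum_nat_const mulnAC leq_mul2r SK orbT //.
Qed.

Lemma bad_bound (F : finFieldType) n k : (k <= n)%N ->
  (#|non_two_MDS_codes F n k| * (#|F| - 1) <= 2 * 5 ^ n * #|codes F n k|)%N.
Proof.
move=> kn.
set r := (n - k)%N.
set f := fun C => (#|[set B in S2 F n r | ev B C]| + #|[set B in S1 F n r | ev B C]|)%N.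
rewrite -sum_nat_const.
apply: (@leq_trans (\sum_(C in non_two_MDS_codes F n k) f C)%N).
  apply: leq_sum => C; rewrite inE => /andP [Cc nC].
  rewrite /f; case: (witness kn Cc nC) => -[A AS evA].
    have A0 : A != 0 by apply: rf_neq0; move: (AS); rewrite inE => /andP [].
    apply: leq_trans (leq_addr _ _).
    have := @scale_count F n k 2 (S2 F n r) C A (@S2_scale F n r) Cc AS A0 evA.
    by [].
  have A0 : A != 0 by apply: rf_neq0; move: (AS); rewrite inE => /andP [].
  apply: leq_trans (leq_addl _ _).
  have := @scale_count F n k 1 (S1 F n r) C A (@S1_scale F n r) Cc AS A0 evA.
  by [].
apply: (@leq_trans (\sum_(C in codes F n k) f C)%N).
  rewrite [X in (_ <= X)%N](big_setID (non_two_MDS_codes F n k)) /=.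
  rewrite (setIidPr _) ?leq_addr //.
  by apply/subsetP => C; rewrite inE => /andP [].
rewrite /f big_split.
rewrite -(double_count (S2 F n r) (codes F n k) (fun B C => ev B C)).
rewrite -(double_count (S1 F n r) (codes F n k) (fun B C => ev B C)).
rewrite -/(NN k) -/(NN k).
rewrite mul2n -addnn mulnDl.
apply: leq_add.
  apply: sumNN => //; first by move=> A; rewrite inE => /andP [].
  by apply: S2_card; rewrite /r leq_subr.
apply: sumNN => //; first by move=> A; rewrite inE => /andP [].
by rewrite mul1n; apply: S1_card; rewrite /r leq_subr.
Qed.

Theorem mainTheorem17 :
  exists c : rat, 0 < c /\
    forall (F : finFieldType) (n k : nat),
      (0 < n)%N -> (1 <= k <= n)%N ->
      (#|non_two_MDS_codes F n k|%:R / #|codes F n k|%:R : rat)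
        <= c * 5%:R ^+ n / #|F|%:R.
Proof.
exists 4; split => // F n k n0 /andP [k1 kn].
have q1 : (1 < #|F|)%N.
  by apply/card_gt1P; exists 0%R, 1%R; rewrite eq_sym oner_neq0.
have bb := bad_bound F kn.
set B := #|non_two_MDS_codes F n k| in bb *.
set N := #|codes F n k| in bb *.
set q := #|F| in q1 bb *.
have q0 : (0 < q%:R :> rat) by rewrite ltr0n; apply: ltn_trans q1.
case: (posnP N) => [->|N0].
  by rewrite invr0 mulr0 divr_ge0 // mulr_ge0 // exprn_ge0.
rewrite ler_pdivrMr ?ltr0n // mulrAC ler_pdivlMr //.
have -> : (4 * 5%:R ^+ n * N%:R : rat) = (4 * 5 ^ n * N)%N%:R by rewrite !natrM natrX.
rewrite -natrM ler_nat.
apply: (@leq_trans (2 * (B * (q - 1)))%N); last first.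
  rewrite -mulnA; rewrite -mulnA in bb.
  move: bb; set y := (5 ^ n * N)%N; set x := (B * (q - 1))%N; lia.
rewrite mulnCA leq_mul2l; apply/orP; right; lia.
Qed.
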